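(* Let $\succcurlyeq$ be a preference relation on the set $\mathcal{B}$ of bets over a propositional language $\mathcal{L}$. The following are equivalent: (1) $\succcurlyeq$ satisfies Non-Triviality, Objective Expected Utility and Implication; (2) $\succcurlyeq$ is represented by a subjective model of uncertainty $(\Omega,t,\lambda)$ with $\lambda$ additive and $t$ monotone; (3) $\succcurlyeq$ is represented by a subjective model of uncertainty $(\Omega',t',\lambda')$ with $\lambda'$ monotone and $t'$ sound.
   Context: Let $\mathbb{P}$ be a set of propositional variables containing distinguished $\mathbf{T}$, $\mathbf{F}$, and $\mathcal{L}$ the language generated by $\neg,\land,\lor$. Write $\phi\implies\psi$ if $\psi$ is deducible from $\phi$ in classical propositional logic, and $\phi\iff\psi$ for mutual deducibility. A bet is a finitely supported $b:\mathcal{L}\to[0,1]$ summing to $1$; $b_\phi$ is the point-mass bet on $\phi$; the set $\mathcal{B}$ of bets is a mixture space under pointwise mixtures and $\succcurlyeq$ is a relation on it. A truth valuation on $\Omega$ is $t:\mathcal{L}\to2^\Omega$ with $t(\mathbf{T})=\Omega,t(\mathbf{F})=\emptyset$; exact: $\phi\iff\psi\Rightarrow t(\phi)=t(\psi)$; monotone: $\phi\implies\psi\Rightarrow t(\phi)\subseteq t(\psi)$; symmetric: $t(\neg\phi)=\Omega\setminus t(\phi)$; $\land$-distributive: $t(\phi\land\psi)=t(\phi)\cap t(\psi)$; sound: all four. A likelihood appraisal on a field $\Sigma\subseteq 2^\Omega$ is $\lambda:\Sigma\to[0,1]$ with $\lambda(\emptyset)=0,\lambda(\Omega)=1$; monotone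 if $A\subseteq B$ implies $\lambda(A)\le\lambda(B)$; additive if finitely additive. A subjective model $(\Omega,t,\lambda)$ ($\lambda$ on a field containing $t(\mathcal{L})$) represents $\succcurlyeq$ if $b\succcurlyeq b'\iff\sum_\phi b(\phi)\lambda(t(\phi))\ge\sum_\phi b'(\phi)\lambda(t(\phi))$. Non-Triviality: $b_{\mathbf{T}}\succcurlyeq b_\phi\succcurlyeq b_{\mathbf{F}}$ for all $\phi$ and $b_{\mathbf{T}}\succ b_{\mathbf{F}}$. Objective Expected Utility: $\succcurlyeq$ is complete, transitive, Archimedean and satisfies Independence. Implication: if $\phi\implies\psi$ then $b_\psi\succcurlyeq b_\phi$. *)

(* Defs.v *)
From HB Require Import structures.
From mathcomp Require Import all_boot all_order all_algebra.
From mathcomp Require Import all_classical all_reals.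
From Stdlib Require Import ClassicalEpsilon.
Set Implicit Arguments. Unset Strict Implicit. Unset Printing Implicit Defensive.
Import Order.TTheory GRing.Theory Num.Theory.
Local Open Scope classical_set_scope.
Local Open Scope ring_scope.

Inductive pform (P : Type) : Type :=
  | Var of P
  | Neg of pform P
  | And of pform P & pform P
  | Or of pform P & pform P.

Section Logic.
Variables (P : Type) (pT pF : P).

(* classical valuations, interpreting the distinguished variables T, F as true/false *)
Fixpoint evalf (v : P -> bool) (f : pform P) : bool :=
  match f with
  | Var p => v p
  | Neg g => ~~ evalf v g
  | And g h => evalf v g && evalf v h
  | Or g h => evalf v g || evalf v h
  end.

Definition admissible (v : P -> bool) := v pT = true /\ v pF = false.

Definition entails (phi psi : pform P) : Prop :=
  forall v, admissible v -> evalf v phi -> evalf v psi.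

Definition equiv (phi psi : pform P) : Prop := entails phi psi /\ entails psi phi.
End Logic.

Section Bets.
Variables (R : realType) (P : Type).
Local Notation pform := (pform P).

Definition is_supp (b : pform -> R) (s : seq pform) : Prop :=
  List.NoDup s /\ (forall phi, b phi != 0 -> List.In phi s).

Definition is_bet (b : pform -> R) : Prop :=
  (forall phi, 0 <= b phi <= 1) /\
  exists s, is_supp b s /\ \sum_(phi <- s) b phi = 1.

Definition supp (b : pform -> R) : seq pform :=
  epsilon (inhabits [::]) (is_supp b).

Definition eu (b : pform -> R) (u : pform -> R) : R :=
  \sum_(phi <- supp b) b phi * u phi.

Definition pm (phi : pform) : pform -> R :=
  fun psi => if `[< psi = phi >] then 1 else 0.

Definition mix (a : R) (b b' : pform -> R) : pform -> R :=
  fun phi => a * b phi + (1 - a) * b' phi.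

Variable pref : (pform -> R) -> (pform -> R) -> Prop.

Definition spref b b' := pref b b' /\ ~ pref b' b.

Definition complete_pref := forall b b', is_bet b -> is_bet b' -> pref b b' \/ pref b' b.

Definition transitive_pref := forall b b' b'', is_bet b -> is_bet b' -> is_bet b'' ->
  pref b b' -> pref b' b'' -> pref b b''.

Definition archimedean_pref := forall b b' b'', is_bet b -> is_bet b' -> is_bet b'' ->
  spref b b' -> spref b' b'' ->
  exists a c : R, [/\ 0 < a < 1, 0 < c < 1,
                      spref (mix a b b'') b' & spref b' (mix c b b'')].

Definition independence_pref := forall b b' b'' (a : R), is_bet b -> is_bet b' -> is_bet b'' ->
  0 < a <= 1 -> spref b b' -> spref (mix a b b'') (mix a b' b'').

Definition objective_EU := [/\ complete_pref, transitive_pref, archimedean_pref & independence_pref].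

Definition non_triviality (pT pF : P) :=
  (forall phi, pref (pm (Var pT)) (pm phi) /\ pref (pm phi) (pm (Var pF))) /\
  spref (pm (Var pT)) (pm (Var pF)).

Definition implication_ax (pT pF : P) :=
  forall phi psi, entails pT pF phi psi -> pref (pm psi) (pm phi).

Section Model.
Variables (pT pF : P) (Omega : Type) (t : pform -> set Omega).

Definition truth_valuation := t (Var pT) = setT /\ t (Var pF) = set0.
Definition t_exact := forall phi psi, equiv pT pF phi psi -> t phi = t psi.
Definition t_monotone := forall phi psi, entails pT pF phi psi -> t phi `<=` t psi.
Definition t_symmetric := forall phi, t (Neg phi) = ~` t phi.
Definition t_and_distributive := forall phi psi, t (And phi psi) = t phi `&` t psi.
Definition t_sound := [/\ t_exact, t_monotone, t_symmetric & t_and_distributive].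

Variables (Sigma : set (set Omega)) (lam : set Omega -> R).

Definition is_field := [/\ Sigma set0,
  (forall A, Sigma A -> Sigma (~` A)) &
  (forall A B, Sigma A -> Sigma B -> Sigma (A `|` B))].

Definition likelihood_appraisal :=
  [/\ forall A, Sigma A -> 0 <= lam A <= 1, lam set0 = 0 & lam setT = 1].
Definition lam_monotone := forall A B, Sigma A -> Sigma B -> A `<=` B -> lam A <= lam B.
Definition lam_additive := forall A B, Sigma A -> Sigma B -> A `&` B = set0 ->
  lam (A `|` B) = lam A + lam B.

Definition subjective_model := [/\ truth_valuation, is_field, (forall phi, Sigma (t phi))
  & likelihood_appraisal].

Definition represents := forall b b', is_bet b -> is_bet b' ->
  (pref b b' <-> eu b' (fun phi => lam (t phi)) <= eu b (fun phi => lam (t phi))).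
End Model.

End Bets.

(* Main.v *)
Require Import Defs.
From HB Require Import structures.
From mathcomp Require Import all_boot all_order all_algebra.
From mathcomp Require Import all_classical all_reals all_analysis.
From Stdlib Require Import ClassicalEpsilon.
From mathcomp Require Import ring lra.
Import Order.TTheory GRing.Theory Num.Theory.
Set Implicit Arguments. Unset Strict Implicit. Unset Printing Implicit Defensive.
Local Open Scope classical_set_scope.
Local Open Scope ring_scope.

HB.instance Definition _ (P : Type) := gen_eqMixin (pform P).

Section Infra.
Variables (R : realType) (P : Type).
Local Notation pform := (pform P).

Lemma In_mem (x : pform) s : List.In x s <-> x \in s.
Proof.
elim: s => [|y s IH] /=; first by split.
rewrite in_cons; split.
- case=> [->|/IH ->]; first by rewrite eqxx.
  by rewrite orbT.
- case/orP=> [/eqP ->|/IH]; by [left|right].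
Qed.

Lemma NoDup_uniq (s : seq pform) : List.NoDup s <-> uniq s.
Proof.
elim: s => [|y s IH] /=; first by split => // _; constructor.
split.
- move=> H; inversion H; subst.
  apply/andP; split; last by apply/IH.
  by apply/negP => /In_mem.
- case/andP => Hy Hs; constructor; last by apply/IH.
  by move/In_mem; apply/negP.
Qed.

Lemma sum_filter_nz (F : pform -> R) s :
  \sum_(x <- s) F x = \sum_(x <- [seq y <- s | F y != 0]) F x.
Proof.
rewrite big_filter [RHS]big_mkcond /=; apply: eq_bigr => x _.
idtac.
by case: eqP => [->|].
Qed.

Lemma sum_supp_eq (F : pform -> R) s1 s2 : uniq s1 -> uniq s2 ->
  (forall x, F x != 0 -> x \in s1) -> (forall x, F x != 0 -> x \in s2) ->
  \sum_(x <- s1) F x = \sum_(x <- s2) F x.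
Proof.
move=> u1 u2 h1 h2; rewrite (sum_filter_nz _ s1) (sum_filter_nz _ s2).
apply: perm_big; apply: uniq_perm; try exact: filter_uniq.
move=> x; rewrite !mem_filter.
by case Fx: (F x != 0) => //=; rewrite (h1 _ Fx) (h2 _ Fx).
Qed.

Lemma supp_spec (b : pform -> R) : is_bet b -> is_supp b (supp b).
Proof.
case=> _ [s [hs _]]; rewrite /supp; apply: epsilon_spec; by exists s.
Qed.

Lemma is_supp_uniq (b : pform -> R) s : is_supp b s -> uniq s.
Proof. by case=> /NoDup_uniq. Qed.

Lemma is_supp_mem (b : pform -> R) s x : is_supp b s -> b x != 0 -> x \in s.
Proof. by case=> _ H /H /In_mem. Qed.

Lemma is_suppI (b : pform -> R) s : uniq s -> (forall x, b x != 0 -> x \in s) -> is_supp b s.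
Proof. by move=> /NoDup_uniq u H; split => // x /H /In_mem. Qed.

Lemma eu_any (b : pform -> R) u s : is_bet b -> is_supp b s ->
  eu b u = \sum_(phi <- s) b phi * u phi.
Proof.
move=> hb hs; rewrite /eu; have hs' := supp_spec hb.
apply: sum_supp_eq; [exact: is_supp_uniq hs'|exact: is_supp_uniq hs| |];
  move=> x Hx; [apply: (is_supp_mem hs')|apply: (is_supp_mem hs)];
  by apply: contraNneq Hx => ->; rewrite mul0r.
Qed.

Lemma pmE (phi psi : pform) : pm R phi psi = if psi == phi then 1 else 0.
Proof. rewrite /pm; case: asboolP; case: eqP => //. Qed.

Lemma pm_supp (phi : pform) : is_supp (pm R phi) [:: phi].
Proof.
apply: is_suppI => // x; rewrite pmE mem_seq1; case: (x =P phi) => // _; by rewrite eqxx.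
Qed.

Lemma pm_bet (phi : pform) : is_bet (pm R phi).
Proof.
split; first by move=> x; rewrite pmE; case: eqP => _; rewrite ?lexx ?ler01.
exists [:: phi]; split; first exact: pm_supp.
by rewrite big_seq1 pmE eqxx.
Qed.

Lemma eu_pm (phi : pform) u : eu (pm R phi) u = u phi.
Proof.
by rewrite (eu_any _ (pm_bet phi) (pm_supp phi)) big_seq1 pmE eqxx mul1r.
Qed.

Lemma sum_bet (b : pform -> R) s : is_bet b -> is_supp b s -> \sum_(x <- s) b x = 1.
Proof.
move=> hb hs; case: (hb) => _ [s' [hs' <-]].
apply: sum_supp_eq; [exact: is_supp_uniq hs|exact: is_supp_uniq hs'| |] => x Hx.
exact: (is_supp_mem hs). exact: (is_supp_mem hs').
Qed.

Lemma bet_range (b : pform -> R) x : is_bet b -> 0 <= b x <= 1.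
Proof. by case=> H _. Qed.

Lemma mix_supp (b c : pform -> R) s1 s2 a : is_supp b s1 -> is_supp c s2 ->
  [/\ is_supp b (undup (s1 ++ s2)), is_supp c (undup (s1 ++ s2)) &
      is_supp (mix a b c) (undup (s1 ++ s2))].
Proof.
move=> h1 h2; split; apply: is_suppI; try exact: undup_uniq; move=> x Hx;
  rewrite mem_undup mem_cat.
- by rewrite (is_supp_mem h1 Hx).
- by rewrite (is_supp_mem h2 Hx) orbT.
- case: (b x =P 0) => [b0|/eqP bn]; last by rewrite (is_supp_mem h1 bn).
  case: (c x =P 0) => [c0|/eqP cn]; last by rewrite (is_supp_mem h2 cn) orbT.
  by move: Hx; rewrite /mix b0 c0 !mulr0 addr0 eqxx.
Qed.

Lemma mix_bet (b c : pform -> R) a : 0 <= a <= 1 -> is_bet b -> is_bet c ->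
  is_bet (mix a b c).
Proof.
move=> /andP[a0 a1] hb hc.
case: (hb) => _ [s1 [h1 _]]; case: (hc) => _ [s2 [h2 _]].
have [h1' h2' h3'] := mix_supp a h1 h2.
split.
- move=> x; rewrite /mix.
  have /andP[b0 b1] := bet_range x hb; have /andP[c0 c1] := bet_range x hc.
  apply/andP; split; first by rewrite addr_ge0 // mulr_ge0 // subr_ge0.
  have e1 : a * b x <= a by rewrite ler_piMr.
  have e2 : (1 - a) * c x <= 1 - a by rewrite ler_piMr // subr_ge0.
  by move: (lerD e1 e2); rewrite [a + _]addrC subrK.
exists (undup (s1 ++ s2)); split => //.
rewrite /mix big_split /= -!mulr_sumr (sum_bet hb h1') (sum_bet hc h2').
by rewrite !mulr1 addrC subrK.
Qed.

Lemma eu_mix (b c : pform -> R) a u : 0 <= a <= 1 -> is_bet b -> is_bet c ->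
  eu (mix a b c) u = a * eu b u + (1 - a) * eu c u.
Proof.
move=> ha hb hc.
case: (hb) => _ [s1 [h1 _]]; case: (hc) => _ [s2 [h2 _]].
have [h1' h2' h3'] := mix_supp a h1 h2.
rewrite (eu_any u (mix_bet ha hb hc) h3') (eu_any u hb h1') (eu_any u hc h2').
rewrite !mulr_sumr -big_split /=; apply: eq_bigr => x _; rewrite /mix; ring.
Qed.

End Infra.

Lemma arch_real (R : realType) (x y z : R) : z < y -> y < x ->
  exists a c : R, [/\ 0 < a < 1, 0 < c < 1, y < a * x + (1 - a) * z & c * x + (1 - c) * z < y].
Proof.
move=> zy yx; have xz : 0 < x - z by rewrite subr_gt0 (lt_trans zy yx).
set r := (y - z) / (x - z).
have hr : r * (x - z) = y - z by rewrite /r divfK // gt_eqF.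
have r0 : 0 < r by rewrite /r divr_gt0 // subr_gt0.
have r1 : r < 1 by rewrite /r ltr_pdivrMr // mul1r ltrD2r.
exists ((1 + r) / 2), (r / 2); split.
- apply/andP; split; lra.
- apply/andP; split; lra.
- have -> : (1 + r) / 2 * x + (1 - (1 + r) / 2) * z = z + ((x - z) + r * (x - z)) / 2 by ring.
  rewrite hr; lra.
- have -> : r / 2 * x + (1 - r / 2) * z = z + (r * (x - z)) / 2 by ring.
  rewrite hr; lra.
Qed.

Section GoodC1.
Variables (R : realType) (P : Type) (pT pF : P).
Variable pref : (pform P -> R) -> (pform P -> R) -> Prop.

Definition good (U : pform P -> R) := [/\ (forall phi, 0 <= U phi <= 1), U (Var pT) = 1,
  U (Var pF) = 0, (forall phi psi, entails pT pF phi psi -> U phi <= U psi) &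
  (forall b b', is_bet b -> is_bet b' -> (pref b b' <-> eu b' U <= eu b U))].

Lemma good_c1 U : good U ->
  [/\ non_triviality pref pT pF, objective_EU pref & implication_ax pref pT pF].
Proof.
case=> U01 UT UF Umon rep.
have spE b b' : is_bet b -> is_bet b' -> spref pref b b' <-> eu b' U < eu b U.
  move=> hb hb'; rewrite /spref (rep _ _ hb hb') (rep _ _ hb' hb); split.
    by case=> h1 h2; rewrite lt_neqAle h1 andbT; apply/negP => /eqP e; apply: h2; rewrite e.
  by move=> h; split; [exact: ltW | rewrite leNgt h].
have hT := pm_bet R (Var pT : pform P); have hF := pm_bet R (Var pF : pform P).
split.
- split.
    move=> phi; have hp := pm_bet R phi.
    rewrite (rep _ _ hT hp) (rep _ _ hp hF) !eu_pm UT UF.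
    by case/andP: (U01 phi) => *; split.
  by rewrite (spE _ _ hT hF) !eu_pm UT UF ltr01.
- split.
  + move=> b b' hb hb'; rewrite (rep _ _ hb hb') (rep _ _ hb' hb); apply/orP; exact: le_total.
  + move=> b b' b'' hb hb' hb''; rewrite (rep _ _ hb hb') (rep _ _ hb' hb'') (rep _ _ hb hb'').
    move=> h1 h2; exact: le_trans h2 h1.
  + move=> b b' b'' hb hb' hb''; rewrite (spE _ _ hb hb') (spE _ _ hb' hb'') => h1 h2.
    have [a [c [ha hc h3 h4]]] := arch_real h2 h1.
    have ha' : 0 <= a <= 1 by case/andP: ha => *; apply/andP; split; exact: ltW.
    have hc' : 0 <= c <= 1 by case/andP: hc => *; apply/andP; split; exact: ltW.
    have hm1 := mix_bet ha' hb hb''; have hm2 := mix_bet hc' hb hb''.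
    exists a, c; split => //; rewrite ?(spE _ _ hm1 hb') ?(spE _ _ hb' hm2) eu_mix //.
  + move=> b b' b'' a hb hb' hb'' ha; rewrite (spE _ _ hb hb') => h.
    have ha' : 0 <= a <= 1 by case/andP: ha => *; apply/andP; split => //; exact: ltW.
    have hm1 := mix_bet ha' hb hb''; have hm2 := mix_bet ha' hb' hb''.
    rewrite (spE _ _ hm1 hm2) !eu_mix //.
    case/andP: ha => a0 a1; nra.
- move=> phi psi e; have hp := pm_bet R phi; have hq := pm_bet R psi.
  rewrite (rep _ _ hq hp) !eu_pm; exact: Umon.
Qed.

End GoodC1.

Section Models.
Variables (R : realType) (P : Type) (pT pF : P).
Variable pref : (pform P -> R) -> (pform P -> R) -> Prop.

Lemma additive_monotone (Omega : Type) (Sigma : set (set Omega)) (lam : set Omega -> R) :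
  is_field Sigma -> (forall A, Sigma A -> 0 <= lam A <= 1) -> lam_additive Sigma lam ->
  lam_monotone Sigma lam.
Proof.
case=> S0 SC SU lam01 add A B SA SB AB.
have SD : Sigma (B `&` ~` A).
  have -> : B `&` ~` A = ~` (~` B `|` A).
    apply/seteqP; split => x /=.
      by case=> Bx nAx [] //.
    move=> H; split.
      by case: (pselect (B x)) => // nB; exfalso; apply: H; left.
    by move=> Ax; apply: H; right.
  apply: (SC); apply: (SU) => //; exact: (SC).
have -> : B = A `|` (B `&` ~` A).
  apply/seteqP; split => x /=.
    by case: (pselect (A x)) => Ax Bx; [left|right].
  by case=> [/AB|[]].
rewrite (add A (B `&` ~` A)) //.
  by rewrite lerDl; case/andP: (lam01 _ SD).
by apply/seteqP; split => x //= [Ax [_ nAx]].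
Qed.

Lemma c2_good : (exists (Omega : Type) (t : pform P -> set Omega)
              (Sigma : set (set Omega)) (lam : set Omega -> R),
              [/\ subjective_model pT pF t Sigma lam, lam_additive Sigma lam,
                  t_monotone pT pF t & represents pref t lam]) ->
  exists U, good pT pF pref U.
Proof.
case=> Omega [t [Sigma [lam [[[tT tF] fld St [l01 l0 l1]] add tmon rep]]]].
have lmon := additive_monotone fld l01 add.
exists (fun phi => lam (t phi)); split => //.
- by move=> phi; apply: l01.
- by rewrite tT.
- by rewrite tF.
- by move=> phi psi e; apply: lmon => //; apply: tmon.
Qed.

Lemma c3_good : (exists (Omega : Type) (t : pform P -> set Omega)
              (Sigma : set (set Omega)) (lam : set Omega -> R),
              [/\ subjective_model pT pF t Sigma lam, lam_monotone Sigma lam,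
                  t_sound pT pF t & represents pref t lam]) ->
  exists U, good pT pF pref U.
Proof.
case=> Omega [t [Sigma [lam [[[tT tF] fld St [l01 l0 l1]] lmon [_ tmon _ _] rep]]]].
exists (fun phi => lam (t phi)); split => //.
- by move=> phi; apply: l01.
- by rewrite tT.
- by rewrite tF.
- by move=> phi psi e; apply: lmon => //; apply: tmon.
Qed.

Definition OmegaV := {v : P -> bool | admissible pT pF v}.
Definition tV (phi : pform P) : set OmegaV := [set w | evalf (sval w) phi].

Lemma tV_sub phi psi : tV phi `<=` tV psi <-> entails pT pF phi psi.
Proof.
split.
  by move=> H v hv ev; exact: (H (exist _ v hv)).
by move=> H [v hv]; rewrite /tV /=; apply: H.
Qed.

Lemma good_c3 U : good pT pF pref U ->
  exists (Omega : Type) (t : pform P -> set Omega)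
              (Sigma : set (set Omega)) (lam : set Omega -> R),
              [/\ subjective_model pT pF t Sigma lam, lam_monotone Sigma lam,
                  t_sound pT pF t & represents pref t lam].
Proof.
case=> U01 UT UF Umon rep.
pose lamc (A : set OmegaV) := U (epsilon (inhabits (Var pF)) (fun phi => A = tV phi)).
have lamcE phi : lamc (tV phi) = U phi.
  have e := epsilon_spec (inhabits (Var pF)) (fun psi => tV phi = tV psi) (ex_intro _ phi erefl).
  rewrite /lamc; apply/le_anti/andP; split; apply: Umon; apply/tV_sub; rewrite -e; exact: subset_refl.
have tVT : tV (Var pT) = setT.
  by apply/seteqP; split => // [[v [hT hF]]] _; rewrite /tV /= hT.
have tVF : tV (Var pF) = set0.
  by apply/seteqP; split => // [[v [hT hF]]]; rewrite /tV /= hF.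
have tVN phi : tV (Neg phi) = ~` tV phi.
  by apply/seteqP; split => w; rewrite /tV /= => /negP.
have tVA phi psi : tV (And phi psi) = tV phi `&` tV psi.
  by apply/seteqP; split => w; rewrite /tV /= => /andP.
have tVO phi psi : tV (Or phi psi) = tV phi `|` tV psi.
  by apply/seteqP; split => w; rewrite /tV /= => /orP.
exists OmegaV, tV, [set A | exists phi, A = tV phi], lamc; split.
- split.
  + by [].
  + split.
    * by exists (Var pF).
    * by move=> A [phi ->]; exists (Neg phi).
    * by move=> A B [phi ->] [psi ->]; exists (Or phi psi).
  + by move=> phi; exists phi.
  + split.
    * by move=> A [phi ->]; rewrite lamcE.
    * by rewrite -tVF lamcE.
    * by rewrite -tVT lamcE.
- move=> A B [phi ->] [psi ->] /tV_sub H; rewrite !lamcE; exact: Umon.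
- split.
  + move=> phi psi [e1 e2]; apply/seteqP; split; exact/tV_sub.
  + by move=> phi psi /tV_sub.
  + exact: tVN.
  + exact: tVA.
- move=> b b' hb hb'.
  have -> : (fun phi => lamc (tV phi)) = U by apply/funext => phi; exact: lamcE.
  exact: rep.
Qed.

End Models.

Section Leb.
Variable R : realType.
Definition I01 : set R := `[0, 1[%classic.
Definition lamL (A : set R) : R := fine (lebesgue_measure (A `&` I01)).

Lemma lamL_itv (u : R) : 0 <= u <= 1 -> lamL `[0, u[%classic = u.
Proof.
case/andP=> u0 u1; rewrite /lamL setIidl; last first.
  move=> x /=; rewrite /I01 /= !in_itv /= => /andP[x0 xu].
  by rewrite x0 /= (lt_le_trans xu u1).
rewrite lebesgue_measure_itv /= lte_fin.
case: ltP => h /=; first by rewrite subr0.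
by apply/eqP; rewrite eq_le u0 h.
Qed.

Lemma lamLT : lamL setT = 1.
Proof.
by rewrite /lamL setTI /I01 lebesgue_measure_itv /= lte_fin ltr01 /= subr0.
Qed.

Lemma lamL0 : lamL set0 = 0.
Proof. by rewrite /lamL set0I measure0. Qed.

Lemma lamL_fin (A : set R) : measurable A ->
  (0 <= lebesgue_measure (A `&` I01) <= 1)%E.
Proof.
move=> mA; rewrite measure_ge0 /=.
have <- : lebesgue_measure I01 = 1%E.
  by rewrite /I01 lebesgue_measure_itv /= lte_fin ltr01 /= oppr0 adde0.
apply: measureIr => //; exact: measurable_itv.
Qed.

Lemma lamL01 (A : set R) : measurable A -> 0 <= lamL A <= 1.
Proof.
move=> /lamL_fin; rewrite /lamL; case: (lebesgue_measure _) => [r||] /=; rewrite ?lee_fin //. by rewrite lexx ler01.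
Qed.

Lemma lamL_add : lam_additive (fun A : set R => measurable A) lamL.
Proof.
move=> A B mA mB AB; rewrite /lamL setIUl measureU //; first last.
- by rewrite setIACA AB set0I.
- by apply: measurableI => //; exact: measurable_itv.
- by apply: measurableI => //; exact: measurable_itv.
have f1 := lamL_fin mA; have f2 := lamL_fin mB.
rewrite fineD //.
- case/andP: f1 => h0 h1; by rewrite ge0_fin_numE // (le_lt_trans h1) // ltry.
- case/andP: f2 => h0 h1; by rewrite ge0_fin_numE // (le_lt_trans h1) // ltry.
Qed.

End Leb.

Lemma good_c2 (R : realType) (P : Type) (pT pF : P) pref (U : pform P -> R) :
  good pT pF pref U ->
  exists (Omega : Type) (t : pform P -> set Omega)
              (Sigma : set (set Omega)) (lam : set Omega -> R),
              [/\ subjective_model pT pF t Sigma lam, lam_additive Sigma lam,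
                  t_monotone pT pF t & represents pref t lam].
Proof.
case=> U01 UT UF Umon rep.
pose t phi : set R := if U phi == 1 then setT else `[0, U phi[%classic.
have tE phi : lamL (t phi) = U phi.
  rewrite /t; case: eqP => [->|_]; first exact: lamLT.
  exact: lamL_itv.
exists R, t, (fun A : set R => measurable A), (@lamL R); split.
- split.
  + by split; rewrite /t ?UT ?UF ?eqxx // eq_sym oner_eq0 set_itvco0.
  + split.
    * exact: measurable0.
    * by move=> A mA; apply: measurableC.
    * by move=> A B mA mB; apply: measurableU.
  + by move=> phi; rewrite /t; case: eqP => _; [exact: measurableT | exact: measurable_itv].
  + split.
    * by move=> A mA; apply: lamL01.
    * exact: lamL0.
    * exact: lamLT.
- exact: lamL_add.
- move=> phi psi /Umon h; rewrite /t.
  case: (U psi =P 1) => [_|n1]; first exact: subsetT.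
  have l1 : U psi < 1 by rewrite lt_neqAle; apply/andP; split; [apply/eqP|case/andP: (U01 psi)].
  have -> : (U phi == 1) = false by apply/negbTE; rewrite lt_eqF // (le_lt_trans h l1).
  move=> x /=; rewrite !in_itv /= => /andP[-> xl] /=; exact: lt_le_trans xl h.
- move=> b b' hb hb'.
  have -> : (fun phi => lamL (t phi)) = U by apply/funext => phi; exact: tE.
  exact: rep.
Qed.


Lemma elem_le_sum (R : realType) (P : Type) (F : pform P -> R) s x :
  uniq s -> x \in s -> (forall y, 0 <= F y) -> F x <= \sum_(y <- s) F y.
Proof.
move=> us xs F0; rewrite (bigD1_seq x) //= lerDl; exact: sumr_ge0.
Qed.

Lemma conv01 (R : realType) (P : Type) (b U : pform P -> R) s :
  (forall x, 0 <= b x) -> \sum_(x <- s) b x = 1 -> (forall x, 0 <= U x <= 1) ->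
  0 <= \sum_(x <- s) b x * U x <= 1.
Proof.
move=> b0 s1 U01; apply/andP; split.
  apply: sumr_ge0 => x _; apply: mulr_ge0 => //; by case/andP: (U01 x).
rewrite -s1; apply: ler_sum => x _; apply: ler_piMr => //; by case/andP: (U01 x).
Qed.

Lemma mixxx (R : realType) (P : Type) (a : R) (b : pform P -> R) : mix a b b = b.
Proof. apply/funext => x; rewrite /mix; ring. Qed.

Lemma mix0 (R : realType) (P : Type) (b c : pform P -> R) : mix 0 b c = c.
Proof. apply/funext => x; rewrite /mix; ring. Qed.

Lemma mixC (R : realType) (P : Type) (a : R) (b c : pform P -> R) : mix a b c = mix (1 - a) c b.
Proof. apply/funext => x; rewrite /mix; ring. Qed.

Lemma zero01 (R : realType) : 0 <= (0:R) <= 1.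
Proof. by rewrite lexx ler01. Qed.
Lemma zero01' (R : realType) : 0 <= (1:R) <= 1.
Proof. by rewrite ler01 lexx. Qed.
Lemma one01 (R : realType) : 0 < (1:R) <= 1.
Proof. by rewrite ltr01 lexx. Qed.

Section VNM.
Variables (R : realType) (P : Type) (pT pF : P).
Variable pref : (pform P -> R) -> (pform P -> R) -> Prop.
Hypothesis NT : non_triviality pref pT pF.
Hypothesis OEU : objective_EU pref.
Hypothesis IMP : implication_ax pref pT pF.

Local Notation bet := (@is_bet R P).
Local Notation T := (pm R (Var pT)).
Local Notation F := (pm R (Var pF)).
Local Notation M a := (mix a T F).
Local Notation sp := (spref pref).

Let cp : complete_pref pref. Proof. by case: OEU. Qed.
Let tr : transitive_pref pref. Proof. by case: OEU. Qed.
Let ar : archimedean_pref pref. Proof. by case: OEU. Qed.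
Let ind : independence_pref pref. Proof. by case: OEU. Qed.

Definition indiff (x y : pform P -> R) := pref x y /\ pref y x.

Lemma refl b : bet b -> pref b b.
Proof. by move=> hb; case: (cp hb hb). Qed.

Lemma notsp b c : bet b -> bet c -> ~ sp b c -> pref c b.
Proof.
move=> hb hc H; case: (cp hc hb) => // h.
case: (pselect (pref c b)) => // n; exfalso; apply: H; by split.
Qed.

Lemma sp_p b c : sp b c -> pref b c.
Proof. by case. Qed.

Lemma sp_irr b c : sp b c -> sp c b -> False.
Proof. by case=> h _ [_]; apply. Qed.

Lemma tr_sp_p a b c : bet a -> bet b -> bet c -> sp a b -> pref b c -> sp a c.
Proof.
move=> ha hb hc [hab nba] hbc; split; first exact: (tr ha hb hc).
move=> hca; apply: nba; exact: (tr hb hc ha).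
Qed.

Lemma tr_p_sp a b c : bet a -> bet b -> bet c -> pref a b -> sp b c -> sp a c.
Proof.
move=> ha hb hc hab [hbc ncb]; split; first exact: (tr ha hb hc).
move=> hca; apply: ncb; exact: (tr hc ha hb).
Qed.

Lemma betT : bet T. Proof. exact: pm_bet. Qed.
Lemma betF : bet F. Proof. exact: pm_bet. Qed.
Lemma betM a : 0 <= a <= 1 -> bet (M a).
Proof. move=> ha; exact: mix_bet ha betT betF. Qed.

Lemma TF : sp T F. Proof. by case: NT. Qed.

Lemma in01 (e : R) : 0 < e <= 1 -> 0 <= e <= 1.
Proof. by case/andP=> e0 e1; rewrite ltW. Qed.

Lemma WI p q W l : bet p -> bet q -> bet W -> 0 <= l <= 1 -> pref p q ->
  pref (mix l p W) (mix l q W).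
Proof.
move=> hp hq hW hl hpq.
have hmp := mix_bet hl hp hW; have hmq := mix_bet hl hq hW.
case: (eqVneq l 0) => [->|l0]; first by rewrite !mix0; exact: refl.
have hl' : 0 < l <= 1.
  by case/andP: hl => a b; rewrite b andbT lt_neqAle eq_sym l0.
apply: notsp => // Hsp.
have hqp : pref q p.
  apply: notsp => // H; exact: sp_irr Hsp (ind hp hq hW hl' H).
case: (pselect (sp T p)) => [hTp|nTp].
- pose H e := mix l (mix e T p) W.
  have hH e : 0 <= e <= 1 -> bet (H e).
    by move=> he; apply: mix_bet => //; apply: mix_bet => //; exact: betT.
  have key e : 0 < e <= 1 -> sp (H e) (mix l q W).
    move=> he; have he' := in01 he.
    apply: ind => //; first by apply: mix_bet => //; exact: betT.
    apply: (tr_sp_p _ hp hq) => //; first by apply: mix_bet => //; exact: betT.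
    by have := ind betT hp hp he hTp; rewrite mixxx.
  have H0 : H 0 = mix l p W by rewrite /H mix0.
  have h01 := zero01 R.
  have h11 := one01 R.
  have Hsp' : sp (mix l q W) (H 0) by rewrite H0.
  have [a [c [ha hc h1 h2]]] := ar (hH 1 (in01 h11)) hmq (hH 0 h01) (key 1 h11) Hsp'.
  have e : mix c (H 1) (H 0) = H c by apply/funext => x; rewrite /H /mix; ring.
  rewrite e in h2; apply: sp_irr h2 (key c _).
  by case/andP: hc => c0 c1; rewrite c0 ltW.
- have hpT : pref p T by apply: notsp => //; exact: betT.
  have hpF : sp p F.
    case: (pselect (sp p F)) => // nPF; exfalso.
    have hFp : pref F p by apply: notsp => //; exact: betF.
    case: TF => _; apply; exact: (tr betF hp betT).
  have hqF : sp q F by apply: (tr_p_sp hq hp betF).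
  pose G e := mix l (mix e F q) W.
  have hG e : 0 <= e <= 1 -> bet (G e).
    by move=> he; apply: mix_bet => //; apply: mix_bet => //; exact: betF.
  have key e : 0 < e <= 1 -> sp (mix l p W) (G e).
    move=> he; have he' := in01 he.
    apply: ind => //; first by apply: mix_bet => //; exact: betF.
    apply: (tr_p_sp hp hq) => //; first by apply: mix_bet => //; exact: betF.
    by have := ind hq betF hq he hqF; rewrite mixxx.
  have G0 : G 0 = mix l q W by rewrite /G mix0.
  have h01 := zero01 R.
  have h11 := one01 R.
  have Hsp' : sp (G 0) (mix l p W) by rewrite G0.
  have [a [c [ha hc h1 h2]]] := ar (hG 0 h01) hmp (hG 1 (in01 h11)) Hsp' (key 1 h11).
  have e : mix a (G 0) (G 1) = G (1 - a) by apply/funext => x; rewrite /G /mix; ring.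
  rewrite e in h1; apply: sp_irr h1 (key (1 - a) _).
  case/andP: ha => a0 a1; apply/andP; split; lra.
Qed.

Lemma WIr p q W l : bet p -> bet q -> bet W -> 0 <= l <= 1 -> pref p q ->
  pref (mix l W p) (mix l W q).
Proof.
move=> hp hq hW hl hpq; rewrite !(mixC l W); apply: WI => //.
by case/andP: hl => a b; apply/andP; split; lra.
Qed.

Lemma indiff_mix w x x' y y' : bet x -> bet x' -> bet y -> bet y' -> 0 <= w <= 1 ->
  indiff x x' -> indiff y y' -> indiff (mix w x y) (mix w x' y').
Proof.
move=> hx hx' hy hy' hw [a1 a2] [b1 b2].
have m1 := mix_bet hw hx hy; have m2 := mix_bet hw hx' hy; have m3 := mix_bet hw hx' hy'.
split.
- apply: (tr m1 m2 m3); [exact: WI | exact: WIr].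
- apply: (tr m3 m2 m1); [exact: WIr | exact: WI].
Qed.

Lemma Mmono a c : 0 <= a -> a < c -> c <= 1 -> sp (M c) (M a).
Proof.
move=> a0 ac c1.
have c0 : 0 < c by exact: le_lt_trans a0 ac.
have hc : 0 < c <= 1 by rewrite c0 c1.
have hc1 : sp (M c) F by have := ind betT betF betF hc TF; rewrite mixxx.
set r := a / c.
have rc : r * c = a by rewrite /r divfK // gt_eqF.
have r0 : 0 <= r by rewrite /r divr_ge0 // ltW.
have r1 : r < 1 by rewrite /r ltr_pdivrMr // mul1r.
have he : 0 < 1 - r <= 1 by apply/andP; split; lra.
have := ind (betM (in01 hc)) betF (betM (in01 hc)) he hc1; rewrite mixxx.
have -> : mix (1 - r) F (M c) = M (r * c) by apply/funext => x; rewrite /mix; ring.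
by rewrite rc.
Qed.

Lemma Mle a c : 0 <= a <= 1 -> 0 <= c <= 1 -> pref (M c) (M a) <-> a <= c.
Proof.
move=> /andP[a0 a1] /andP[c0 c1]; split => h.
  case: (leP a c) => // ca; exfalso.
  by case: (Mmono c0 ca a1) => _; apply.
case: (eqVneq a c) => [->|ne]; first by apply: refl; apply: betM; rewrite c0 c1.
by apply: sp_p; apply: Mmono => //; rewrite lt_neqAle ne h.
Qed.

Lemma M1 : M 1 = T. Proof. by apply/funext => x; rewrite /mix; ring. Qed.
Lemma M0 : M 0 = F. Proof. by apply/funext => x; rewrite /mix; ring. Qed.

Lemma solv x : bet x -> pref T x -> pref x F -> exists u, 0 <= u <= 1 /\ indiff x (M u).
Proof.
move=> hx hTx hxF.
case: (pselect (sp x F)) => [sxF|nxF]; last first.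
  exists 0; split; first by apply/andP; split; lra.
  by rewrite M0; split => //; apply: notsp => //; exact: betF.
case: (pselect (sp T x)) => [sTx|nTx]; last first.
  exists 1; split; first by apply/andP; split; lra.
  by rewrite M1; split => //; apply: notsp => //; exact: betT.
pose S := [set a : R | 0 <= a <= 1 /\ pref x (M a)].
have S0 : S 0 by split; [apply/andP; split; lra | rewrite M0].
have hub : has_ubound S by exists 1 => a [/andP[_ a1] _].
have hne : S !=set0 by exists 0.
set u := sup S.
have u0 : 0 <= u by exact: (ub_le_sup hub S0).
have u1 : u <= 1 by apply: ge_sup => // a [/andP[_ a1] _].
have hu : 0 <= u <= 1 by rewrite u0 u1.
have hMu := betM hu.
have C1 : ~ sp (M u) x.
  move=> H.
  have [a0 [c0 [ha hc h1 h2]]] := ar hMu hx betF H sxF.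
  have e : mix a0 (M u) F = M (a0 * u) by apply/funext => y; rewrite /mix; ring.
  rewrite e in h1.
  case/andP: ha => a00 a01.
  have au : 0 <= a0 * u <= 1 by apply/andP; split; nra.
  have ub : u <= a0 * u.
    apply: ge_sup => // s [s01 hs].
    case: (leP s (a0 * u)) => // lt; exfalso.
    case/andP: (au) => au0 _; case/andP: (s01) => _ s1.
    have := tr_p_sp hx (betM s01) (betM au) hs (Mmono au0 lt s1).
    exact: sp_irr h1.
  have uz : u = 0 by nra.
  rewrite uz M0 in H; exact: sp_irr H sxF.
have C2 : ~ sp x (M u).
  move=> H.
  have [a0 [c0 [ha hc h1 h2]]] := ar betT hx hMu sTx H.
  have e : mix c0 T (M u) = M (c0 + (1 - c0) * u) by apply/funext => y; rewrite /mix; ring.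
  rewrite e in h2.
  case/andP: hc => c00 c01.
  have cu : 0 <= c0 + (1 - c0) * u <= 1 by apply/andP; split; nra.
  have le : c0 + (1 - c0) * u <= u by apply: (ub_le_sup hub); split => //; exact: sp_p.
  have uz : u = 1 by nra.
  rewrite uz M1 in H; exact: sp_irr H sTx.
exists u; split => //; split.
- by apply: notsp => //.
- by apply: notsp => //.
Qed.

Definition Uv (phi : pform P) : R :=
  epsilon (inhabits 0) (fun u => 0 <= u <= 1 /\ indiff (pm R phi) (M u)).

Lemma U_spec phi : 0 <= Uv phi <= 1 /\ indiff (pm R phi) (M (Uv phi)).
Proof.
apply: (epsilon_spec (inhabits 0) (fun u => 0 <= u <= 1 /\ indiff (pm R phi) (M u))).
case: NT => H _; case: (H phi) => h1 h2.
exact: solv (pm_bet R phi) h1 h2.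
Qed.

Lemma U01 phi : 0 <= Uv phi <= 1.
Proof. by case: (U_spec phi). Qed.

Lemma rep_ind s : forall b, (forall x, 0 <= b x <= 1) -> is_supp b s ->
  \sum_(x <- s) b x = 1 -> indiff b (M (\sum_(x <- s) b x * Uv x)).
Proof.
elim: s => [|phi s IH] b b01 hs hsum.
  by move: hsum; rewrite big_nil => /eqP; rewrite eq_sym oner_eq0.
have /andP[nphi us] : (phi \notin s) && uniq s.
  by have := is_supp_uniq hs; rewrite cons_uniq.
move: hsum; rewrite big_cons => hsum; rewrite big_cons.
have b0 x : 0 <= b x by case/andP: (b01 x).
have sb0 : 0 <= \sum_(x <- s) b x by apply: sumr_ge0 => x _; exact: b0.
case: (eqVneq (b phi) 1) => [w1|w1].
- have szero : \sum_(x <- s) b x = 0 by lra.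
  have bz x : x \in s -> b x = 0.
    move=> xs; apply/eqP; rewrite eq_le b0 andbT -szero; exact: elem_le_sum.
  have -> : \sum_(x <- s) b x * Uv x = 0.
    by rewrite big1_seq // => x /andP[_ xs]; rewrite bz // mul0r.
  rewrite w1 mul1r addr0.
  have -> : b = pm R phi.
    apply/funext => x; rewrite pmE; case: eqP => [->//|nx].
    case: (eqVneq (b x) 0) => // bx.
    have := is_supp_mem hs bx; rewrite in_cons => /orP[/eqP //|xs]; exact: bz.
  by case: (U_spec phi).
- have w1' : b phi < 1 by rewrite lt_neqAle w1; case/andP: (b01 phi).
  have nz : 1 - b phi != 0 by rewrite subr_eq0 eq_sym.
  have pos : 0 < 1 - b phi by rewrite subr_gt0.
  pose b' x := if x == phi then 0 else b x / (1 - b phi).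
  have hs' : is_supp b' s.
    apply: is_suppI => // x; rewrite /b'; case: (x =P phi) => [_|nx]; first by rewrite eqxx.
    move=> bx; have : b x != 0 by apply: contraNneq bx => ->; rewrite mul0r.
    move/(is_supp_mem hs); rewrite in_cons => /orP[/eqP //|//].
  have sum_s : \sum_(x <- s) b x = 1 - b phi by lra.
  have hsum' : \sum_(x <- s) b' x = 1.
    have -> : \sum_(x <- s) b' x = (\sum_(x <- s) b x) / (1 - b phi).
      rewrite mulr_suml; apply: eq_big_seq => x xs; rewrite /b'; case: (x =P phi) => // ex.
      by move: nphi; rewrite -ex xs.
    by rewrite sum_s divff.
  have b'01 x : 0 <= b' x <= 1.
    rewrite /b'; case: (x =P phi) => [_|nx]; first exact: zero01.
    apply/andP; split; first by rewrite divr_ge0 // ltW.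
    rewrite ler_pdivrMr // mul1r.
    case: (boolP (x \in s)) => xs.
      rewrite -sum_s; exact: elem_le_sum.
    have -> : b x = 0.
      apply/eqP; apply: contraNT xs => bx.
      have := is_supp_mem hs bx; rewrite in_cons => /orP[/eqP ex|//]; by exfalso.
    exact: ltW.
  have hb' : bet b' by split => //; exists s.
  have IH' := IH b' b'01 hs' hsum'.
  have v'01 : 0 <= \sum_(x <- s) b' x * Uv x <= 1.
    by apply: conv01 => // x; [case/andP: (b'01 x) | exact: U01].
  have eb : b = mix (b phi) (pm R phi) b'.
    apply/funext => x; rewrite /mix /b' pmE; case: (x =P phi) => [->|_].
      by rewrite mulr1 mulr0 addr0.
    by rewrite mulr0 add0r mulrC divfK.
  have ev : \sum_(x <- s) b x * Uv x = (1 - b phi) * \sum_(x <- s) b' x * Uv x.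
    rewrite mulr_sumr; apply: eq_big_seq => x xs; rewrite /b'; case: (x =P phi) => [ex|_].
      by move: nphi; rewrite -ex xs.
    by rewrite mulrA [(1 - _) * _]mulrC divfK.
  rewrite ev.
  have -> : M (b phi * Uv phi + (1 - b phi) * \sum_(x <- s) b' x * Uv x) =
    mix (b phi) (M (Uv phi)) (M (\sum_(x <- s) b' x * Uv x)).
    by apply/funext => y; rewrite /mix; ring.
  suff : indiff (mix (b phi) (pm R phi) b') (mix (b phi) (M (Uv phi)) (M (\sum_(x <- s) b' x * Uv x))).
    by rewrite -eb.
  apply: (indiff_mix (pm_bet R phi) (betM (U01 phi)) hb' (betM v'01) (b01 phi) _ IH').
  by case: (U_spec phi).
Qed.

Lemma repr b : bet b -> 0 <= eu b Uv <= 1 /\ indiff b (M (eu b Uv)).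
Proof.
move=> hb; case: (hb) => b01 [s [hs hsum]]; rewrite (eu_any Uv hb hs); split.
  by apply: conv01 => // x; [case/andP: (b01 x) | exact: U01].
exact: rep_ind.
Qed.

Lemma c1_good_main : good pT pF pref Uv.
Proof.
have rep b b' : bet b -> bet b' -> (pref b b' <-> eu b' Uv <= eu b Uv).
  move=> hb hb'; have [r1 [i1 i1']] := repr hb; have [r2 [i2 i2']] := repr hb'.
  rewrite -Mle //; split => h.
    apply: (tr (betM r1) hb (betM r2)) => //; exact: (tr hb hb' (betM r2)).
  apply: (tr hb (betM r1) hb') => //; exact: (tr (betM r1) (betM r2) hb').
split.
- exact: U01.
- have [h01 [i1 i2]] := U_spec (Var pT).
  have j1 : pref (M 1) (M (Uv (Var pT))) by rewrite M1.
  have j2 : pref (M (Uv (Var pT))) (M 1) by rewrite M1.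
  apply/le_anti/andP; split; [exact/(Mle h01 (zero01' R)) | exact/(Mle (zero01' R) h01)].
- have [h01 [i1 i2]] := U_spec (Var pF).
  have j1 : pref (M 0) (M (Uv (Var pF))) by rewrite M0.
  have j2 : pref (M (Uv (Var pF))) (M 0) by rewrite M0.
  apply/le_anti/andP; split; [exact/(Mle h01 (zero01 R)) | exact/(Mle (zero01 R) h01)].
- move=> phi psi e; have := IMP e.
  rewrite (rep _ _ (pm_bet R psi) (pm_bet R phi)) !eu_pm //.
- exact: rep.
Qed.

End VNM.

Theorem proposition3 (R : realType) (P : Type) (pT pF : P) (hTF : pT <> pF)
    (pref : (pform P -> R) -> (pform P -> R) -> Prop) :
  let c1 := [/\ non_triviality pref pT pF, objective_EU pref & implication_ax pref pT pF] in
  let c2 := exists (Omega : Type) (t : pform P -> set Omega)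
              (Sigma : set (set Omega)) (lam : set Omega -> R),
              [/\ subjective_model pT pF t Sigma lam, lam_additive Sigma lam,
                  t_monotone pT pF t & represents pref t lam] in
  let c3 := exists (Omega' : Type) (t' : pform P -> set Omega')
              (Sigma' : set (set Omega')) (lam' : set Omega' -> R),
              [/\ subjective_model pT pF t' Sigma' lam', lam_monotone Sigma' lam',
                  t_sound pT pF t' & represents pref t' lam'] in
  (c1 <-> c2) /\ (c2 <-> c3).
Proof.
cbv zeta.
have h1g : [/\ non_triviality pref pT pF, objective_EU pref & implication_ax pref pT pF] ->
    exists U, good pT pF pref U.
  by case=> nt oeu imp; eexists; exact: (c1_good_main nt oeu imp).
have hg1 := fun H : exists U, good pT pF pref U => let: ex_intro U hU := H in good_c1 hU.
have h2g := @c2_good R P pT pF pref.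
have hg2 := fun H : exists U, good pT pF pref U => let: ex_intro U hU := H in good_c2 hU.
have h3g := @c3_good R P pT pF pref.
have hg3 := fun H : exists U, good pT pF pref U => let: ex_intro U hU := H in good_c3 hU.
split; split => H.
- exact: hg2 (h1g H).
- exact: hg1 (h2g H).
- exact: hg3 (h2g H).
- exact: hg2 (h3g H).
Qed.
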